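(* Let $\hat\Pi_t=\hat\sigma_t(M_t)$, $t=0,\dots,T$, be an approximate information state with parameters $\epsilon_t,\delta_t,\lambda_t$. For $t=0,\dots,T$ let $L_{\hat V_{t+1}}$ be a Lipschitz constant of $\hat V_{t+1}$ (with $L_{\hat V_{T+1}}=0$), and define $\alpha_{T+1}:=0$ and $\alpha_t:=\max(\epsilon_t,\ \alpha_{t+1}+L_{\hat V_{t+1}}\delta_t)$. Then for all $t=0,\dots,T$, $m_t\in[[M_t]]$, $u_t\in[[U_t]]$: $$|Q_t(m_t,u_t)-\hat Q_t(\hat\sigma_t(m_t),u_t)|\le\alpha_t,\qquad |V_t(m_t)-\hat V_t(\hat\sigma_t(m_t))|\le\alpha_t.$$
   Context: Uncertain variables: fix a sample space $\Omega$; an uncertain variable with values in a set $\mathcal{X}$ is a map $X:\Omega\to\mathcal{X}$, with marginal range $[[X]]:=\{X(\omega):\omega\in\Omega\}$; uncertain variables are independent if their joint range is the product of their marginal ranges. Hausdorff distance: for nonempty subsets $\mathcal{A},\mathcal{B}$ of a metric space $(\mathcal{S},\eta)$, $\mathcal{H}(\mathcal{A},\mathcal{B}):=\max\{\sup_{a\in\mathcal{A}}\inf_{b\in\mathcal{B}}\eta(a,b),\sup_{b\in\mathcal{B}}\inf_{a\in\mathcal{A}}\eta(a,b)\}$. A function $f:\mathcal{X}\to\mathcal{Y}$ between metric spaces is $L$-invertible if there is $L_{f^{-1}}\ge0$ with $\mathcal{H}(f^{-1}(y^1),f^{-1}(y^2))\le L_{f^{-1}}\eta(y^1,y^2)$ for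 all $y^1,y^2$. System: horizon $T\in\mathbb{N}$. For $t=0,\dots,T$ there are independent disturbances $W_t\in\mathcal{W}_t$, actions $U_t\in\mathcal{U}_t$ taking values in a given set $[[U_t]]\subseteq\mathcal{U}_t$, observations $Y_0=h_0(W_0)$, $Y_{t+1}=h_{t+1}(W_{0:t},U_{0:t})$, and costs $C_t=d_t(W_{0:t},U_{0:t})\in\mathcal{C}_t\subset\mathbb{R}_{\ge0}$. Standing assumptions: $\mathcal{U}_t,\mathcal{W}_t,\mathcal{Y}_t$ are bounded subsets of a metric space $(\mathcal{S},\eta)$ (product spaces carry a metric also denoted $\eta$), the $\mathcal{C}_t$ are bounded subsets of $\mathbb{R}_{\ge0}$, each $h_t$ is Lipschitz and $L$-invertible, each $d_t$ is Lipschitz. The memory is $M_t=(Y_{0:t},U_{0:t-1})\in\mathcal{M}_t:=\prod_{\ell=0}^t\mathcal{Y}_\ell\times\prod_{\ell=0}^{t-1}\mathcal{U}_\ell$. Strategy-independent ranges: for $m_t=(y_{0:t},u_{0:t-1})$ let $\mathcal{W}(m_t)$ be the set of $w_{0:t}\in\prod_{\ell=0}^t[[W_\ell]]$ with $y_0=h_0(w_0)$ and $y_\ell=h_\ell(w_{0:\ell-1},u_{0:\ell-1})$ for $\ell=1,\dots,t$. Let $[[M_t]]$ be the set of such $m_t$ with $u_\ell\in[[U_\ell]]$ and $\mathcal{W}(m_t)\neq\emptyset$. For $m_t\in[[M_t]]$, $u_t\in[[U_t]]$: $[[C_t|m_t,u_t]]:=\{d_t(w_{0:t},u_{0:t}):w_{0:t}\in\mathcal{W}(m_t)\}$,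 $[[Y_{t+1}|m_t,u_t]]:=\{h_{t+1}(w_{0:t},u_{0:t}):w_{0:t}\in\mathcal{W}(m_t)\}$, $[[M_{t+1}|m_t,u_t]]:=\{(m_t,u_t,y_{t+1}):y_{t+1}\in[[Y_{t+1}|m_t,u_t]]\}$. For functions $\hat\sigma_t$ on $\mathcal{M}_t$ and $\hat\Pi_t=\hat\sigma_t(M_t)$: $[[\hat\Pi_t]]:=\hat\sigma_t([[M_t]])$, $[[M_t|\hat\pi_t]]:=\{m_t\in[[M_t]]:\hat\sigma_t(m_t)=\hat\pi_t\}$, $[[\hat\Pi_{t+1}|m_t,u_t]]:=\{\hat\sigma_{t+1}(m_{t+1}):m_{t+1}\in[[M_{t+1}|m_t,u_t]]\}$, and for $Z\in\{C_t,Y_{t+1},\hat\Pi_{t+1}\}$, $[[Z|\hat\pi_t,u_t]]:=\bigcup_{m_t\in[[M_t|\hat\pi_t]]}[[Z|m_t,u_t]]$. Memory-based DP: $V_{T+1}\equiv0$ and for $t=T,\dots,0$, $Q_t(m_t,u_t):=\max\{\sup_{c\in[[C_t|m_t,u_t]]}c,\ \sup_{m_{t+1}\in[[M_{t+1}|m_t,u_t]]}V_{t+1}(m_{t+1})\}$, $V_t(m_t):=\inf_{u_t\in[[U_t]]}Q_t(m_t,u_t)$. Approximate information state: $\hat\Pi_t=\hat\sigma_t(M_t)$ with $L$-invertible $\hat\sigma_t:\mathcal{M}_t\to\hat{\mathcal{P}}_t$, $\hat{\mathcal{P}}_t$ bounded with metric $\eta$, such that for each $t=0,\dots,T$ there are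 $\epsilon_t,\delta_t,\lambda_t\ge0$ with, for all $m_t\in[[M_t]]$, $u_t\in[[U_t]]$: (1) $|\sup_{c\in[[C_t|m_t,u_t]]}c-\sup_{c\in[[C_t|\hat\sigma_t(m_t),u_t]]}c|\le\epsilon_t$; (2) $\mathcal{H}([[\hat\Pi_{t+1}|m_t,u_t]],[[\hat\Pi_{t+1}|\hat\sigma_t(m_t),u_t]])\le\delta_t$; (3) for all $\hat\pi_t^1,\hat\pi_t^2\in[[\hat\Pi_t]]$, $\mathcal{H}([[\hat\Pi_{t+1}|\hat\pi_t^1,u_t]],[[\hat\Pi_{t+1}|\hat\pi_t^2,u_t]])\le\lambda_t\,\eta(\hat\pi_t^1,\hat\pi_t^2)$. Approximate DP: $\hat V_{T+1}\equiv0$ and for $t=T,\dots,0$, $\hat\pi_t\in[[\hat\Pi_t]]$, $u_t\in[[U_t]]$: $\hat Q_t(\hat\pi_t,u_t):=\max\{\sup_{c\in[[C_t|\hat\pi_t,u_t]]}c,\ \sup_{\hat\pi_{t+1}\in[[\hat\Pi_{t+1}|\hat\pi_t,u_t]]}\hat V_{t+1}(\hat\pi_{t+1})\}$, $\hat V_t(\hat\pi_t):=\inf_{u_t\in[[U_t]]}\hat Q_t(\hat\pi_t,u_t)$. (Each $\hat V_t$ is Lipschitz on $[[\hat\Pi_t]]$.) *)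

(* Defs.v *)
From HB Require Import structures.
From mathcomp Require Import all_boot all_order all_algebra.
From mathcomp Require Import boolp classical_sets reals.
Set Implicit Arguments. Unset Strict Implicit. Unset Printing Implicit Defensive.
Import Order.TTheory GRing.Theory Num.Theory.
Local Open Scope classical_set_scope.
Local Open Scope ring_scope.

Section Defs.
Variable R : realType.

Section Metric.
Variables (X Y : Type).

Definition is_metric (eta : X -> X -> R) : Prop :=
  forall x y z, 0 <= eta x y /\ (eta x y = 0 <-> x = y) /\
                eta x y = eta y x /\ eta x z <= eta x y + eta y z.

Definition mbounded (eta : X -> X -> R) (A : set X) : Prop :=
  exists B : R, forall x y, A x -> A y -> eta x y <= B.

Definition hdist (eta : X -> X -> R) (A B : set X) : R :=
  Num.max (sup [set inf [set eta a b | b in B] | a in A])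
          (sup [set inf [set eta a b | a in A] | b in B]).

Definition lipschitz_on (etaX : X -> X -> R) (etaY : Y -> Y -> R)
    (A : set X) (f : X -> Y) : Prop :=
  exists L : R, 0 <= L /\
    forall x1 x2, A x1 -> A x2 -> etaY (f x1) (f x2) <= L * etaX x1 x2.

(* f restricted to the domain A is L-invertible (the Hausdorff distance being
   defined for nonempty sets, we quantify over points of the image f @` A) *)
Definition L_invertible_on (etaX : X -> X -> R) (etaY : Y -> Y -> R)
    (A : set X) (f : X -> Y) : Prop :=
  exists L : R, 0 <= L /\
    forall y1 y2, (f @` A) y1 -> (f @` A) y2 ->
      hdist etaX (A `&` (f @^-1` [set y1])) (A `&` (f @^-1` [set y2]))
        <= L * etaY y1 y2.
End Metric.

(* All of U_t, W_t, Y_t take values in the metric space S.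
   w_{0:t}, y_{0:t}, u_{0:t} are encoded as sequences (index l = time l).
   A memory m_t = (y_{0:t}, u_{0:t-1}) is a pair of sequences.
   Ur t = [[U_t]], Wr t = [[W_t]] (marginal ranges),
   h0 = h_0, hs t = h_{t+1} (applied to (w_{0:t}, u_{0:t})),
   d t = d_t (applied to (w_{0:t}, u_{0:t})),
   sigma t = \hat\sigma_t. *)
Section System.
Variables (S P : Type).
Variables (Ur Wr : nat -> set S).
Variable h0 : S -> S.
Variable hs : nat -> seq S -> seq S -> S.
Variable d : nat -> seq S -> seq S -> R.
Variable sigma : nat -> seq S * seq S -> P.

Definition mem := (seq S * seq S)%type.

Definition Wm (t : nat) (m : mem) : set (seq S) :=
  [set ws | size ws = t.+1 /\
            (forall l x, onth ws l = Some x -> Wr l x) /\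
            (forall w0, onth ws 0 = Some w0 -> onth m.1 0 = Some (h0 w0)) /\
            (forall l, (l < t)%N ->
               onth m.1 l.+1 = Some (hs l (take l.+1 ws) (take l.+1 m.2)))].

(* [[M_t]] (the size/space constraints of \mathcal M_t are given by Msp) *)
Definition Reach (Msp : nat -> set mem) (t : nat) : set mem :=
  [set m | Msp t m /\ (forall l x, onth m.2 l = Some x -> Ur l x) /\
           Wm t m !=set0].

Definition Cset t (m : mem) (u : S) : set R :=
  [set d t ws (rcons m.2 u) | ws in Wm t m].
Definition Yset t (m : mem) (u : S) : set S :=
  [set hs t ws (rcons m.2 u) | ws in Wm t m].
Definition Mnext t (m : mem) (u : S) : set mem :=
  [set (rcons m.1 y, rcons m.2 u) | y in Yset t m u].
Definition Pinext t (m : mem) (u : S) : set P :=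
  [set sigma t.+1 m' | m' in Mnext t m u].

Variable Msp : nat -> set mem.

Definition Pirange t : set P := [set sigma t m | m in Reach Msp t].
Definition Mfib t (pi : P) : set mem := [set m | Reach Msp t m /\ sigma t m = pi].
Definition CsetPi t (pi : P) (u : S) : set R :=
  \bigcup_(m in Mfib t pi) Cset t m u.
Definition PinextPi t (pi : P) (u : S) : set P :=
  \bigcup_(m in Mfib t pi) Pinext t m u.

(* Memory-based DP; Vrec n t = V_t when n = T+1-t *)
Fixpoint Vrec (n t : nat) (m : mem) : R :=
  match n with
  | 0 => 0
  | n'.+1 => inf [set Num.max (sup (Cset t m u))
                              (sup [set Vrec n' t.+1 m' | m' in Mnext t m u])
                 | u in Ur t]
  end.
Definition Qmem (T t : nat) (m : mem) (u : S) : R :=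
  Num.max (sup (Cset t m u)) (sup [set Vrec (T - t) t.+1 m' | m' in Mnext t m u]).
Definition Vmem (T t : nat) (m : mem) : R := Vrec (T.+1 - t) t m.

Fixpoint Vhrec (n t : nat) (pi : P) : R :=
  match n with
  | 0 => 0
  | n'.+1 => inf [set Num.max (sup (CsetPi t pi u))
                              (sup [set Vhrec n' t.+1 p' | p' in PinextPi t pi u])
                 | u in Ur t]
  end.
Definition Qhat (T t : nat) (pi : P) (u : S) : R :=
  Num.max (sup (CsetPi t pi u))
          (sup [set Vhrec (T - t) t.+1 p' | p' in PinextPi t pi u]).
Definition Vhat (T t : nat) (pi : P) : R := Vhrec (T.+1 - t) t pi.
End System.

Definition Mspace (S : Type) (Usp Ysp : nat -> set S) (t : nat) : set (mem S) :=
  [set m | size m.1 = t.+1 /\ size m.2 = t /\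
           (forall l y, onth m.1 l = Some y -> Ysp l y) /\
           (forall l u, onth m.2 l = Some u -> Usp l u)].

(* domain prod_{l<=t} W_l x prod_{l<=t} U_l of h_{t+1} and d_t *)
Definition WUspace (S : Type) (Wsp Usp : nat -> set S) (t : nat)
  : set (seq S * seq S) :=
  [set p | size p.1 = t.+1 /\ size p.2 = t.+1 /\
           (forall l w, onth p.1 l = Some w -> Wsp l w) /\
           (forall l u, onth p.2 l = Some u -> Usp l u)].

(* alpha_t, with alpha_{T+1} = 0; arec n t = alpha_t when n = T+1-t;
   LV t is the Lipschitz constant of \hat V_{t+1} *)
Fixpoint arec (eps delta LV : nat -> R) (n t : nat) : R :=
  match n with
  | 0 => 0
  | n'.+1 => Num.max (eps t) (arec eps delta LV n' t.+1 + LV t * delta t)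
  end.
Definition alpha (T : nat) (eps delta LV : nat -> R) (t : nat) : R :=
  arec eps delta LV (T.+1 - t) t.

End Defs.

(* Main.v *)
Require Import Defs.
From HB Require Import structures.
From mathcomp Require Import all_boot all_order all_algebra.
From mathcomp Require Import boolp classical_sets reals.
From mathcomp Require Import lra.
Import Order.TTheory GRing.Theory Num.Theory.
Local Open Scope classical_set_scope.
Local Open Scope ring_scope.

Lemma sup_close (R : realType) (I : Type) (D : set I) (f g : I -> R) (a M : R) :
  D !=set0 -> (forall i, D i -> f i <= M) ->
  (forall i, D i -> `|f i - g i| <= a) ->
  `|sup (f @` D) - sup (g @` D)| <= a.
Proof.
move=> [i0 Di0] fM fg.
have ubf : has_ubound (f @` D) by exists M => _ [i Di <-]; exact: fM.
have ubg : has_ubound (g @` D).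
  exists (M + a) => _ [i Di <-]; have := fM i Di; have := fg i Di.
  rewrite ler_norml => /andP[h1 h2] h3; lra.
have nf : (f @` D) !=set0 by exists (f i0), i0.
have ng : (g @` D) !=set0 by exists (g i0), i0.
have h1 : sup (f @` D) <= sup (g @` D) + a.
  apply: ge_sup => // _ [i Di <-].
  have := ub_le_sup ubg (ex_intro2 _ _ i Di erefl) => /=.
  have := fg i Di; rewrite ler_norml => /andP[? ?] ?; lra.
have h2 : sup (g @` D) <= sup (f @` D) + a.
  apply: ge_sup => // _ [i Di <-].
  have := ub_le_sup ubf (ex_intro2 _ _ i Di erefl) => /=.
  have := fg i Di; rewrite ler_norml => /andP[? ?] ?; lra.
rewrite ler_norml; apply/andP; split; lra.
Qed.

Lemma inf_close (R : realType) (I : Type) (D : set I) (f g : I -> R) (a M : R) :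
  D !=set0 -> (forall i, D i -> M <= f i) ->
  (forall i, D i -> `|f i - g i| <= a) ->
  `|inf (f @` D) - inf (g @` D)| <= a.
Proof.
move=> [i0 Di0] fM fg.
have lbf : has_lbound (f @` D) by exists M => _ [i Di <-]; exact: fM.
have lbg : has_lbound (g @` D).
  exists (M - a) => _ [i Di <-]; have := fM i Di; have := fg i Di.
  rewrite ler_norml => /andP[h1 h2] h3; lra.
have nf : (f @` D) !=set0 by exists (f i0), i0.
have ng : (g @` D) !=set0 by exists (g i0), i0.
have h1 : inf (f @` D) - a <= inf (g @` D).
  apply: lb_le_inf => // _ [i Di <-].
  have := ge_inf lbf (ex_intro2 _ _ i Di erefl) => /=.
  have := fg i Di; rewrite ler_norml => /andP[? ?] ?; lra.
have h2 : inf (g @` D) - a <= inf (f @` D).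
  apply: lb_le_inf => // _ [i Di <-].
  have := ge_inf lbg (ex_intro2 _ _ i Di erefl) => /=.
  have := fg i Di; rewrite ler_norml => /andP[? ?] ?; lra.
rewrite ler_norml; apply/andP; split; lra.
Qed.

Lemma sup_haus1 (R : realType) (P : Type) (eta : P -> P -> R) (Dom A B : set P)
  (V : P -> R) (L K delta : R) :
  A `<=` Dom -> B `<=` Dom -> A !=set0 -> B !=set0 -> 0 <= L ->
  (forall p q, Dom p -> Dom q -> 0 <= eta p q /\ eta p q <= K) ->
  (forall p q, Dom p -> Dom q -> `|V p - V q| <= L * eta p q) ->
  sup [set inf [set eta a b | b in B] | a in A] <= delta ->
  sup (V @` A) <= sup (V @` B) + L * delta.
Proof.
move=> AD BD [a0 Aa0] [b0 Bb0] L0 etaK Lip hd.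
have ubB : has_ubound (V @` B).
  exists (V b0 + L * K) => _ [b Bb <-].
  have := Lip b b0 (BD _ Bb) (BD _ Bb0); have := etaK b b0 (BD _ Bb) (BD _ Bb0).
  move=> [e0 eK]; rewrite ler_norml => /andP[_ h].
  have : L * eta b b0 <= L * K by apply: ler_wpM2l.
  lra.
apply: ge_sup; first by exists (V a0), a0.
move=> _ [a Aa <-].
have lbE : has_lbound [set eta a b | b in B].
  by exists 0 => _ [b Bb <-]; have [] := etaK a b (AD _ Aa) (BD _ Bb).
have neE : [set eta a b | b in B] !=set0 by exists (eta a b0), b0.
have infd : inf [set eta a b | b in B] <= delta.
  apply: le_trans hd; apply: ub_le_sup (ex_intro2 _ _ a Aa erefl).
  exists K => _ [a' Aa' <-].
  apply: le_trans (ge_inf _ (ex_intro2 _ _ b0 Bb0 erefl)) _.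
    by exists 0 => _ [b Bb <-]; have [] := etaK a' b (AD _ Aa') (BD _ Bb).
  by have [] := etaK a' b0 (AD _ Aa') (BD _ Bb0).
apply/ler_addgt0Pr => e e0.
have [L0' | Lpos] := eqVneq L 0.
  have [_ [b Bb _] _] := inf_adherent (ltr01) (conj neE lbE).
  have := Lip a b (AD _ Aa) (BD _ Bb); rewrite L0' mul0r ler_norml => /andP[_ h].
  have := ub_le_sup ubB (ex_intro2 _ _ b Bb erefl) => /=.
  rewrite mul0r; lra.
have Lp : 0 < L by rewrite lt_def Lpos L0.
have eL : 0 < e / L by apply: divr_gt0.
have [_ [b Bb <-] hb] := inf_adherent eL (conj neE lbE).
have := Lip a b (AD _ Aa) (BD _ Bb); rewrite ler_norml => /andP[_ h].
have := ub_le_sup ubB (ex_intro2 _ _ b Bb erefl) => /= hs.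
have : L * eta a b <= L * (delta + e / L).
  apply: ler_wpM2l => //; apply/ltW; lra.
rewrite mulrDr mulrCA divff ?mulr1 //; lra.
Qed.

Lemma sup_haus (R : realType) (P : Type) (eta : P -> P -> R) (Dom A B : set P)
  (V : P -> R) (L K delta : R) :
  A `<=` Dom -> B `<=` Dom -> A !=set0 -> B !=set0 -> 0 <= L ->
  (forall p q, Dom p -> Dom q -> 0 <= eta p q /\ eta p q <= K) ->
  (forall p q, Dom p -> Dom q -> `|V p - V q| <= L * eta p q) ->
  hdist eta A B <= delta ->
  `|sup (V @` A) - sup (V @` B)| <= L * delta.
Proof.
move=> AD BD nA nB L0 etaK Lip; rewrite /hdist ge_max => /andP[h1 h2].
have := @sup_haus1 R P eta Dom A B V L K delta AD BD nA nB L0 etaK Lip h1.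
have := @sup_haus1 R P (fun p q => eta q p) Dom B A V L K delta BD AD nB nA L0
  (fun p q Dp Dq => etaK q p Dq Dp)
  (fun p q Dp Dq => eq_ind _ (fun z => z <= _) (Lip q p Dq Dp) _ (distrC _ _)) h2.
rewrite ler_norml => ? ?; apply/andP; split; lra.
Qed.

Lemma max_close (R : realType) (a b c d x y : R) :
  `|a - c| <= x -> `|b - d| <= y -> `|Num.max a b - Num.max c d| <= Num.max x y.
Proof.
rewrite !ler_norml => /andP[h1 h2] /andP[h3 h4].
have hx : x <= Num.max x y by rewrite le_max lexx.
have hy : y <= Num.max x y by rewrite le_max lexx orbT.
case: (leP a b) => ab; case: (leP c d) => cd; apply/andP; split; lra.
Qed.

Lemma sup_const0 (R : realType) (I : Type) (D : set I) :
  sup [set (0:R) | _ in D] = 0.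
Proof.
have [[i Di] | D0] := pselect (D !=set0).
  have -> : [set (0:R) | _ in D] = [set 0].
    by apply/seteqP; split => [_ [j _ <-] // | _ ->]; exists i.
  exact: sup1.
have -> : D = set0 by apply/seteqP; split => // j Dj; apply: D0; exists j.
by rewrite image_set0 sup0.
Qed.

Lemma onth_rcons_lt (T : Type) (s : seq T) x n :
  (n < size s)%N -> onth (rcons s x) n = onth s n.
Proof. by move=> h; rewrite -cats1 onth_cat h. Qed.

Lemma onth_rcons_size (T : Type) (s : seq T) x :
  onth (rcons s x) (size s) = Some x.
Proof. by rewrite -cats1 onth_cat ltnn subnn. Qed.

Lemma onth_rconsP {T : Type} {s : seq T} {x n y} :
  onth (rcons s x) n = Some y -> onth s n = Some y \/ (n = size s /\ y = x).
Proof.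
rewrite -cats1 onth_cat; case: ifP => [_ | hn]; first by left.
move/onth1P => [h ->]; right; split => //.
by move/negbT: hn; rewrite -leqNgt => hn; apply/eqP; rewrite eqn_leq hn -subn_eq0 h.
Qed.

Theorem theorem3 (R : realType) (S P : Type) (T : nat)
  (etaS : S -> S -> R) (etaM : seq S * seq S -> seq S * seq S -> R)
  (etaP : P -> P -> R)
  (Usp Wsp Ysp : nat -> set S) (Csp : nat -> set R) (Phat : nat -> set P)
  (Ur Wr : nat -> set S) (h0 : S -> S) (hs : nat -> seq S -> seq S -> S)
  (d : nat -> seq S -> seq S -> R) (sigma : nat -> seq S * seq S -> P)
  (eps delta lambda LV : nat -> R) :
  (* standing assumptions *)
  is_metric etaS -> is_metric etaM -> is_metric etaP ->
  (forall t, (t <= T)%N ->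
     mbounded etaS (Usp t) /\ mbounded etaS (Wsp t) /\ mbounded etaS (Ysp t) /\
     Csp t `<=` [set c | 0 <= c] /\ mbounded (fun a b : R => `|a - b|) (Csp t) /\
     Ur t `<=` Usp t /\ Wr t `<=` Wsp t /\ Ur t !=set0 /\ Wr t !=set0) ->
  (forall w, Wsp 0%N w -> Ysp 0%N (h0 w)) ->
  lipschitz_on etaS etaS (Wsp 0%N) h0 ->
  L_invertible_on etaS etaS (Wsp 0%N) h0 ->
  (forall t, (t < T)%N ->
     (forall p, WUspace Wsp Usp t p -> Ysp t.+1 (hs t p.1 p.2)) /\
     lipschitz_on etaM etaS (WUspace Wsp Usp t) (fun p => hs t p.1 p.2) /\
     L_invertible_on etaM etaS (WUspace Wsp Usp t) (fun p => hs t p.1 p.2)) ->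
  (forall t, (t <= T)%N ->
     (forall p, WUspace Wsp Usp t p -> Csp t (d t p.1 p.2)) /\
     lipschitz_on etaM (fun a b : R => `|a - b|) (WUspace Wsp Usp t)
       (fun p => d t p.1 p.2)) ->
  (* approximate information state *)
  (forall t, (t <= T)%N ->
     (forall m, Mspace Usp Ysp t m -> Phat t (sigma t m)) /\
     mbounded etaP (Phat t) /\
     L_invertible_on etaM etaP (Mspace Usp Ysp t) (sigma t)) ->
  (forall t, (t <= T)%N -> 0 <= eps t /\ 0 <= delta t /\ 0 <= lambda t) ->
  (forall t, (t <= T)%N ->
     forall m, Reach Ur Wr h0 hs (Mspace Usp Ysp) t m ->
     forall u, Ur t u ->
       `| sup (Cset Wr h0 hs d t m u)
          - sup (CsetPi Ur Wr h0 hs d sigma (Mspace Usp Ysp) t (sigma t m) u) |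
         <= eps t /\
       hdist etaP (Pinext Wr h0 hs sigma t m u)
         (PinextPi Ur Wr h0 hs sigma (Mspace Usp Ysp) t (sigma t m) u)
         <= delta t /\
       (forall p1 p2,
          Pirange Ur Wr h0 hs sigma (Mspace Usp Ysp) t p1 ->
          Pirange Ur Wr h0 hs sigma (Mspace Usp Ysp) t p2 ->
          hdist etaP (PinextPi Ur Wr h0 hs sigma (Mspace Usp Ysp) t p1 u)
                     (PinextPi Ur Wr h0 hs sigma (Mspace Usp Ysp) t p2 u)
            <= lambda t * etaP p1 p2)) ->
  (* LV t is a Lipschitz constant of \hat V_{t+1}, with L_{\hat V_{T+1}} = 0 *)
  (forall t, (t <= T)%N -> 0 <= LV t) ->
  LV T = 0 ->
  (forall t, (t < T)%N ->
     forall p1 p2,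
       Pirange Ur Wr h0 hs sigma (Mspace Usp Ysp) t.+1 p1 ->
       Pirange Ur Wr h0 hs sigma (Mspace Usp Ysp) t.+1 p2 ->
       `| Vhat Ur Wr h0 hs d sigma (Mspace Usp Ysp) T t.+1 p1
          - Vhat Ur Wr h0 hs d sigma (Mspace Usp Ysp) T t.+1 p2 |
         <= LV t * etaP p1 p2) ->
  (* conclusion *)
  forall t, (t <= T)%N ->
  forall m, Reach Ur Wr h0 hs (Mspace Usp Ysp) t m ->
  forall u, Ur t u ->
    `| Qmem Ur Wr h0 hs d T t m u
       - Qhat Ur Wr h0 hs d sigma (Mspace Usp Ysp) T t (sigma t m) u |
      <= alpha T eps delta LV t /\
    `| Vmem Ur Wr h0 hs d T t m
       - Vhat Ur Wr h0 hs d sigma (Mspace Usp Ysp) T t (sigma t m) |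
      <= alpha T eps delta LV t.
Proof.
move=> mS mM mP Hstd Hh0Y Hh0L Hh0I Hhs Hd Hsig Hpar Happ HLV0 HLVT HLip.
pose Rch := Reach Ur Wr h0 hs (Mspace Usp Ysp).
pose Pir := Pirange Ur Wr h0 hs sigma (Mspace Usp Ysp).
have WU : forall t m u ws, (t <= T)%N -> Rch t m -> Wm Wr h0 hs t m ws -> Ur t u ->
    WUspace Wsp Usp t (ws, rcons m.2 u).
  move=> t m u ws tT [[s1 [s2 [hY hU]]] [hUr _]] [sw [hW _]] Uu.
  split; first by [].
  split; first by rewrite /= size_rcons s2.
  split.
    move=> l w /= hl.
    have lt : (l < t.+1)%N by rewrite -sw -onthTE hl.
    have lT : (l <= T)%N by apply: leq_trans tT; rewrite -ltnS.
    have [_ [_ [_ [_ [_ [_ [WrW _]]]]]]] := Hstd l lT.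
    by apply: WrW; exact: hW hl.
  move=> l x /= /onth_rconsP [h | [-> ->]].
    have lt : (l < t)%N by rewrite -s2 -onthTE h.
    have [_ [_ [_ [_ [_ [UrU _]]]]]] := Hstd l (leq_trans (ltnW lt) tT).
    by apply: UrU; exact: hUr h.
  have [_ [_ [_ [_ [_ [UrU _]]]]]] := Hstd t tT.
  by rewrite s2; apply: UrU.
have F1 : forall t m u m', (t < T)%N -> Rch t m -> Ur t u ->
    Mnext Wr h0 hs t m u m' -> Rch t.+1 m'.
  move=> t [m1 m2] u _ tT Rm Uu [_ [ws Wws <-] <-].
  have Rm' := Rm; case: Rm' => [[s1 [s2 [hY hU]]] [hUr _]].
  have [sw [hW [h0c hsc]]] := Wws.
  have wu := WU t (m1,m2) u ws (ltnW tT) Rm Wws Uu.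
  have [hsY _] := Hhs t tT.
  have [_ [_ [_ [_ [_ [_ [_ [_ [w1 Ww1]]]]]]]]] := Hstd t.+1 tT.
  have [_ [_ [_ [_ [_ [UrU _]]]]]] := Hstd t (ltnW tT).
  split; [split; [|split; [|split]] | split].
  - by rewrite /= size_rcons s1.
  - by rewrite /= size_rcons s2.
  - move=> l y /= /onth_rconsP [h | [-> ->]]; first exact: hY h.
    rewrite s1; exact: hsY _ wu.
  - move=> l x /= /onth_rconsP [h | [-> ->]]; first exact: hU h.
    rewrite s2; exact: UrU.
  - move=> l x /= /onth_rconsP [h | [-> ->]]; first exact: hUr h.
    by rewrite s2.
  - exists (rcons ws w1); split; first by rewrite size_rcons sw.
    split; [| split].
    + move=> l x /onth_rconsP [h | [-> ->]]; first exact: hW h.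
      by rewrite sw.
    + move=> w0; rewrite onth_rcons_lt ?sw // => /h0c h.
      by rewrite [_.1]/= onth_rcons_lt ?s1.
    + move=> l lt; rewrite [_.1]/= [_.2]/=; rewrite ltnS leq_eqVlt in lt; case/orP: lt => [/eqP -> | lt].
      * rewrite (_ : take t.+1 (rcons ws w1) = ws); last first.
          by rewrite -cats1 takel_cat ?sw // take_oversize ?sw.
        rewrite (_ : take t.+1 (rcons m2 u) = rcons m2 u); last first.
          by rewrite take_oversize // size_rcons s2.
        by rewrite -[X in onth _ X]s1 onth_rcons_size.
      * rewrite onth_rcons_lt ?s1 ?ltnS //; rewrite (hsc l lt) /=.
        rewrite -!cats1 !takel_cat //; first by rewrite s2.
        by rewrite sw ltnS ltnW.
have F2 : forall t m u, Rch t m -> Mnext Wr h0 hs t m u !=set0.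
  move=> t m u [_ [_ [ws Wws]]].
  by eexists; exists (hs t ws (rcons m.2 u)); first exists ws.
have C0 : forall t m u, (t <= T)%N -> Rch t m -> Ur t u ->
    0 <= sup (Cset Wr h0 hs d t m u).
  move=> t m u tT Rm Uu.
  have [_ [_ [ws Wws]]] := Rm.
  have [_ [_ [_ [Cnn [[B hB] _]]]]] := Hstd t tT.
  have [HdC _] := Hd t tT.
  have inC : forall ws', Wm Wr h0 hs t m ws' -> Csp t (d t ws' (rcons m.2 u)).
    by move=> ws' W'; exact: (HdC (ws', rcons m.2 u) (WU _ _ _ _ tT Rm W' Uu)).
  have c0 := Cnn _ (inC _ Wws); rewrite /= in c0.
  apply: le_trans c0 _.
  apply: ub_le_sup (ex_intro2 _ _ ws Wws erefl).
  exists (d t ws (rcons m.2 u) + B) => _ [ws' W' <-].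
  have := hB _ _ (inC _ W') (inC _ Wws); rewrite ler_norml => /andP[_ ?]; lra.
have alS : forall t, (t <= T)%N -> alpha T eps delta LV t =
    Num.max (eps t) (alpha T eps delta LV t.+1 + LV t * delta t).
  by move=> t tT; rewrite /alpha subSS subSn.
have step : forall t, (t <= T)%N ->
   (t = T \/ ((t < T)%N /\ forall m', Rch t.+1 m' ->
      `|Vmem Ur Wr h0 hs d T t.+1 m'
        - Vhat Ur Wr h0 hs d sigma (Mspace Usp Ysp) T t.+1 (sigma t.+1 m')|
      <= alpha T eps delta LV t.+1)) ->
   forall m, Rch t m ->
   (forall u, Ur t u ->
    `| Qmem Ur Wr h0 hs d T t m u
       - Qhat Ur Wr h0 hs d sigma (Mspace Usp Ysp) T t (sigma t m) u |
      <= alpha T eps delta LV t) /\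
    `| Vmem Ur Wr h0 hs d T t m
       - Vhat Ur Wr h0 hs d sigma (Mspace Usp Ysp) T t (sigma t m) |
      <= alpha T eps delta LV t.
  move=> t tT IH m Rm.
  have Qp : forall u, Ur t u ->
    `| Qmem Ur Wr h0 hs d T t m u
       - Qhat Ur Wr h0 hs d sigma (Mspace Usp Ysp) T t (sigma t m) u |
      <= alpha T eps delta LV t.
    move=> u Uu.
    have [He [Hdl _]] := Happ t tT m Rm u Uu.
    rewrite alS // /Qmem /Qhat; apply: max_close => //.
    case: IH => [tE | [tlt IHV]].
      subst t; rewrite !subnn !sup_const0 subrr normr0 HLVT mul0r addr0.
      by rewrite /alpha subnn.
    have [HsP [[K hK] _]] := Hsig t.+1 tlt.
    have DomP : forall p, Pir t.+1 p -> Phat t.+1 p.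
      by move=> _ [m' [Ms _] <-]; exact: HsP.
    have etaK : forall p q, Pir t.+1 p -> Pir t.+1 q -> 0 <= etaP p q /\ etaP p q <= K.
      move=> p q Dp Dq; split; last exact: hK (DomP _ Dp) (DomP _ Dq).
      by have [] := mP p q p.
    have [m0 M0] := F2 t m u Rm.
    have Pin_sub : forall m2, Rch t m2 -> Pinext Wr h0 hs sigma t m2 u `<=` Pir t.+1.
      by move=> m2 R2 _ [m' Mm' <-]; exists m' => //; exact: F1 _ _ _ _ tlt R2 Uu Mm'.
    have PiPi_sub : PinextPi Ur Wr h0 hs sigma (Mspace Usp Ysp) t (sigma t m) u
        `<=` Pir t.+1.
      by move=> p [m2 [R2 _] Pp]; exact: Pin_sub _ R2 _ Pp.
    pose Vh := Vhat Ur Wr h0 hs d sigma (Mspace Usp Ysp) T t.+1.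
    have p0R : Pir t.+1 (sigma t.+1 m0) by exists m0 => //; exact: F1 _ _ _ _ tlt Rm Uu M0.
    have Lip := HLip t tlt.
    have L0 := HLV0 t (ltnW tlt).
    have e1 : `|sup [set Vrec Ur Wr h0 hs d (T - t) t.+1 m' | m' in Mnext Wr h0 hs t m u]
        - sup (Vh @` Pinext Wr h0 hs sigma t m u)| <= alpha T eps delta LV t.+1.
      rewrite /Pinext image_comp distrC.
      apply: (@sup_close R _ _ _ _ _ (Vh (sigma t.+1 m0) + LV t * K)).
      - by exists m0.
      - move=> m' Mm' /=.
        have R' := F1 _ _ _ _ tlt Rm Uu Mm'.
        have pR : Pir t.+1 (sigma t.+1 m') by exists m'.
        have := Lip _ _ pR p0R.
        have [_ eK] := etaK _ _ pR p0R.
        rewrite ler_norml => /andP[_ h].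
        have : LV t * etaP (sigma t.+1 m') (sigma t.+1 m0) <= LV t * K.
          by apply: ler_wpM2l.
        rewrite /Vh; lra.
      - move=> m' Mm'; rewrite distrC; exact: IHV _ (F1 _ _ _ _ tlt Rm Uu Mm').
    have e2 : `|sup (Vh @` Pinext Wr h0 hs sigma t m u)
        - sup (Vh @` PinextPi Ur Wr h0 hs sigma (Mspace Usp Ysp) t (sigma t m) u)|
        <= LV t * delta t.
      apply: (@sup_haus R P etaP (Pir t.+1) _ _ Vh (LV t) K (delta t)) => //.
      - exact: Pin_sub.
      - by exists (sigma t.+1 m0); exists m0.
      - by exists (sigma t.+1 m0); exists m; [split | exists m0].
    apply: le_trans (ler_distD (sup (Vh @` Pinext Wr h0 hs sigma t m u)) _ _) _.
    by apply: lerD; [exact: e1 | exact: e2].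
  split => //.
  rewrite /Vmem /Vhat subSn //.
  have [_ [_ [_ [_ [_ [_ [_ [nUr _]]]]]]]] := Hstd t tT.
  apply: (@inf_close R S (Ur t) (Qmem Ur Wr h0 hs d T t m)
     (Qhat Ur Wr h0 hs d sigma (Mspace Usp Ysp) T t (sigma t m)) _ 0) => //.
  move=> u Uu; rewrite /Qmem le_max; apply/orP; left; exact: C0.
have main : forall k t, (t + k = T)%N -> forall m, Rch t m ->
   (forall u, Ur t u ->
    `| Qmem Ur Wr h0 hs d T t m u
       - Qhat Ur Wr h0 hs d sigma (Mspace Usp Ysp) T t (sigma t m) u |
      <= alpha T eps delta LV t) /\
    `| Vmem Ur Wr h0 hs d T t m
       - Vhat Ur Wr h0 hs d sigma (Mspace Usp Ysp) T t (sigma t m) |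
      <= alpha T eps delta LV t.
  elim=> [|k IHk] t htk m Rm.
    rewrite addn0 in htk; apply: step => //; [by rewrite htk | by left].
  have tlt : (t < T)%N by rewrite -htk addnS ltnS leq_addr.
  apply: step (ltnW tlt) _ m Rm; right; split => // m' Rm'.
  have htk' : (t.+1 + k = T)%N by rewrite addSnnS.
  by have [_ ->] := IHk t.+1 htk' m' Rm'.
move=> t tT m Rm u Uu.
have [hq hv] := main (T - t)%N t (subnKC tT) m Rm.
by split; [exact: hq | exact: hv].
Qed.
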